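(* The action of the automorphism group $\mathrm{Aut}(M_7)$ on the moduli space $\mathcal{R}_7$ (equivalently, by birational maps on the quartic surface $Z_7$) is faithful.
   Context: Over $\mathbb{C}$. $M_7$ is the rank-3 matroid on $E=\{1,\dots,7,1',\dots,7'\}$ in which every 3-subset is a basis except the triples $\{a,b,c'\}$ with $a\neq b\in\{1,\dots,7\}$, $a+b\equiv 2c\pmod 7$. $\mathrm{Aut}(M_7)$ is the group of permutations of $E$ mapping bases to bases; identifying $i'$ with $7+i$, it is generated by $(1,7,4,3,6,5,2)(8,14,11,10,13,12,9)$ and $(1,3,5,6,7,2)(8,10,12,13,14,9)$ and is isomorphic to the Frobenius group of order 42. A realization of $M_7$ is a labeled family of 14 distinct lines $(m_e)_{e\in E}$ in $\mathbb{P}^2$ such that three are concurrent iff their labels form a non-basis; $\mathcal{R}_7$ is the moduli space (a surface) of $\mathrm{PGL}_3$-orbits of realizations. $\sigma\in\mathrm{Aut}(M_7)$ acts on realizations by permuting the labels of the lines, which induces an action on $\mathcal{R}_7$. $\mathcal{R}_7$ is a dense open subset of the quartic $Z_7\subset\mathbb{P}^3$: $y_1^2y_2^2+y_1^2y_2y_3-y_1y_2^2y_3-y_1y_2y_3^2-y_1^2y_2y_4-y_1y_2^2y_4+y_1y_2y_3y_4-y_2y_3^2y_4+y_1y_2y_4^2+y_3^2y_4^2=0$. *)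

(* Defs.v *)
From HB Require Import structures.
From mathcomp Require Import all_boot all_order all_algebra all_fingroup.
From mathcomp Require Import reals complex.
Set Implicit Arguments. Unset Strict Implicit. Unset Printing Implicit Defensive.
Import GRing.Theory.
Local Open Scope ring_scope.

(* Ground set E = {1,...,7,1',...,7'} encoded as 'I_14:
   label i (1<=i<=7) is the ordinal i-1, label i' = 7+i is the ordinal 7+i-1. *)

Definition M7_nonbasis (B : {set 'I_14}) : bool :=
  [exists i : 'I_14, exists j : 'I_14, exists k : 'I_14,
    [&& (i < 7)%N, (j < 7)%N, i != j, (7 <= k)%N,
        ((i.+1 + j.+1) %% 7 == (2 * (k.+1 - 7)) %% 7)%N
      & B == [set i; j; k]]].

Definition M7_basis (B : {set 'I_14}) : bool :=
  (#|B| == 3)%N && ~~ M7_nonbasis B.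

Definition M7_aut (s : {perm 'I_14}) : bool :=
  [forall B : {set 'I_14}, M7_basis B ==> M7_basis (s @: B)].

(* A labelled family of lines in P^2 over F: line m e = {x | m e *m x = 0}. *)
Definition lines_concurrent (F : fieldType) (m : 'I_14 -> 'rV[F]_3)
    (a b c : 'I_14) : Prop :=
  exists p : 'cV[F]_3, p != 0 /\
    [/\ m a *m p = 0, m b *m p = 0 & m c *m p = 0].

Definition M7_realization (F : fieldType) (m : 'I_14 -> 'rV[F]_3) : Prop :=
  [/\ forall e, m e != 0,
      forall e f, e != f -> ~ (exists c : F, m e = c *: m f)
    & forall a b c, a != b -> b != c -> a != c ->
        (lines_concurrent m a b c <-> M7_nonbasis [set a; b; c])].

(* Same PGL_3-orbit (same point of the moduli space R_7). *)
Definition PGL3_equiv (F : fieldType) (m m' : 'I_14 -> 'rV[F]_3) : Prop :=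
  exists A : 'M[F]_3, A \in unitmx /\
    exists lam : 'I_14 -> F, (forall e, lam e != 0) /\
      forall e, m' e = lam e *: (m e *m A).

Definition relabel (F : fieldType) (s : {perm 'I_14}) (m : 'I_14 -> 'rV[F]_3) :
  'I_14 -> 'rV[F]_3 := fun e => m ((s^-1)%g e).

(* Main.v *)
From Stdlib Require Import ZArith.
Require Import Defs.
From HB Require Import structures.
From mathcomp Require Import all_boot all_order all_algebra all_fingroup.
From mathcomp Require Import reals complex.
From mathcomp Require Import ssrZ ring.
Import GRing.Theory.
Local Open Scope ring_scope.

(* Proof strategy: an explicit integral realization m0 of M_7 (points of an
   elliptic curve with a rational 7-torsion point); any relabelling s fixing its
   PGL_3-orbit preserves the zero pattern of 3x3 minors and a degree-0
   cross-ratio invariant; the zero pattern forces s to be determined by its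
   values on 3 labels, and a finite computation rules out all candidates but 1. *)
Local Close Scope ring_scope.

Local Open Scope Z_scope.
Definition ptl : seq (Z * Z * Z) := [::
(-3850, -151250, 1);
(3850, -108900, 343);
(2772, 379456, 1);
(-39600, 302500, 729);
(-9900, -1225125, 64);
(880, -14080, 1);
(20, 1400, 1);
(15840, 3097600, 1);
(-800800, -10224500, 343);
(286, -3388, 1);
(-9900, 55000, 729);
(3080, -266805, 512);
(100100, 9680000, 2197);
(-450, -52650, 1)].
Definition ptn (e : nat) : Z * Z * Z := nth (0,0,0) ptl e.
Definition det3z (p q r : Z * Z * Z) : Z :=
  let: (p0,p1,p2) := p in let: (q0,q1,q2) := q in let: (r0,r1,r2) := r in
  (p0 * (q1 * r2 - q2 * r1) - p1 * (q0 * r2 - q2 * r0) + p2 * (q0 * r1 - q1 * r0)).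
Definition crossz (p q : Z * Z * Z) : bool :=
  let: (p0,p1,p2) := p in let: (q0,q1,q2) := q in
  [|| p1 * q2 - p2 * q1 != 0, p2 * q0 - p0 * q2 != 0 | p0 * q1 - p1 * q0 != 0].
Local Close Scope Z_scope.
Definition Dn (a b c : nat) : Z := det3z (ptn a) (ptn b) (ptn c).
Definition I14 : seq nat := iota 0 14.
Fixpoint hasl (f : nat -> bool) (s : seq nat) : bool :=
  match s with [::] => false | x :: s' => if f x then true else hasl f s' end.
Lemma haslE f s : hasl f s = has f s.
Proof. by elim: s => //= x s ->; case: (f x). Qed.

Definition nbc3 (i j k : nat) : bool :=
  [&& (i < 7)%N, (j < 7)%N, i != j, (7 <= k)%N &
        ((i.+1 + j.+1) %% 7 == (2 * (k.+1 - 7)) %% 7)%N].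
Definition nb3 (a b c : nat) : bool :=
  [|| nbc3 a b c, nbc3 b a c, nbc3 a c b, nbc3 c a b, nbc3 b c a | nbc3 c b a].

Definition real_ok : bool :=
  all (fun a => all (fun b => all (fun c =>
     if (a == b) || (b == c) || (a == c) then true else ((Dn a b c == Z0) == nb3 a b c)) I14) I14) I14.
Definition nz_ok : bool := all (fun e => ptn e != (Z0,Z0,Z0)) I14.
Definition cross_ok : bool := all (fun e => all (fun f => (e == f) || crossz (ptn e) (ptn f)) I14) I14.

Definition TT : seq (seq nat) := [::
  [:: 0; 11; 8; 12; 9; 13; 10; 0; 2; 4; 6; 1; 3; 5];
  [:: 11; 1; 12; 9; 13; 10; 7; 6; 1; 3; 5; 0; 2; 4];
  [:: 8; 12; 2; 13; 10; 7; 11; 5; 0; 2; 4; 6; 1; 3];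
  [:: 12; 9; 13; 3; 7; 11; 8; 4; 6; 1; 3; 5; 0; 2];
  [:: 9; 13; 10; 7; 4; 8; 12; 3; 5; 0; 2; 4; 6; 1];
  [:: 13; 10; 7; 11; 8; 5; 9; 2; 4; 6; 1; 3; 5; 0];
  [:: 10; 7; 11; 8; 12; 9; 6; 1; 3; 5; 0; 2; 4; 6];
  [:: 7; 6; 5; 4; 3; 2; 1; 7; 7; 7; 7; 7; 7; 7];
  [:: 2; 8; 0; 6; 5; 4; 3; 8; 8; 8; 8; 8; 8; 8];
  [:: 4; 3; 9; 1; 0; 6; 5; 9; 9; 9; 9; 9; 9; 9];
  [:: 6; 5; 4; 10; 2; 1; 0; 10; 10; 10; 10; 10; 10; 10];
  [:: 1; 0; 6; 5; 11; 3; 2; 11; 11; 11; 11; 11; 11; 11];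
  [:: 3; 2; 1; 0; 6; 12; 4; 12; 12; 12; 12; 12; 12; 12];
  [:: 5; 4; 3; 2; 1; 0; 13; 13; 13; 13; 13; 13; 13; 13]].

Definition thirdn (x y : nat) : nat := nth x (nth [::] TT x) y.
Definition uniq_ok : bool :=
  all (fun x => all (fun y => all (fun z =>
    ~~ [&& x != y, z != x, z != y & Dn x y z == Z0] || (thirdn x y == z)) I14) I14) I14.

Definition Gl (a b c : nat) : seq nat :=
  let v11 := thirdn a b in
  let v8 := thirdn a c in
  let v12 := thirdn b c in
  let v6 := thirdn c v11 in
  let v3 := thirdn a v12 in
  let v10 := thirdn a v6 in
  let v7 := thirdn b v6 in
  let v9 := thirdn b v3 in
  let v5 := thirdn b v10 in
  let v13 := thirdn c v3 in
  let v4 := thirdn c v10 in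
  [:: a; b; c; v3; v4; v5; v6; v7; v8; v9; v10; v11; v12; v13].

Definition idfail (g : seq nat) : bool :=
  let G := nth 0 g in
  (Z.mul (Z.mul (Z.mul (Dn (G 7) (G 0) (G 1)) (Dn (G 7) (G 8) (G 9))) (Dn 7 0 8)) (Dn 7 1 9)
   != Z.mul (Z.mul (Z.mul (Dn 7 0 1) (Dn 7 8 9)) (Dn (G 7) (G 0) (G 8))) (Dn (G 7) (G 1) (G 9))).
Definition ZTl : seq (seq (seq bool)) := [::
  [:: [:: true; true; true; true; true; true; true; true; true; true; true; true; true; true];
     [:: true; true; false; false; false; false; false; false; false; false; false; true; false; false];
     [:: true; false; true; false; false; false; false; false; true; false; false; false; false; false];
     [:: true; false; false; true; false; false; false; false; false; false; false; false; true; false];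
     [:: true; false; false; false; true; false; false; false; false; true; false; false; false; false];
     [:: true; false; false; false; false; true; false; false; false; false; false; false; false; true];
     [:: true; false; false; false; false; false; true; false; false; false; true; false; false; false];
     [:: true; false; false; false; false; false; false; true; false; false; false; false; false; false];
     [:: true; false; true; false; false; false; false; false; true; false; false; false; false; false];
     [:: true; false; false; false; true; false; false; false; false; true; false; false; false; false];
     [:: true; false; false; false; false; false; true; false; false; false; true; false; false; false];
     [:: true; true; false; false; false; false; false; false; false; false; false; true; false; false];
     [:: true; false; false; true; false; false; false; false; false; false; false; false; true; false];
     [:: true; false; false; false; false; true; false; false; false; false; false; false; false; true]];
  [:: [:: true; true; false; false; false; false; false; false; false; false; false; true; false; false];
     [:: true; true; true; true; true; true; true; true; true; true; true; true; true; true];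
     [:: false; true; true; false; false; false; false; false; false; false; false; false; true; false];
     [:: false; true; false; true; false; false; false; false; false; true; false; false; false; false];
     [:: false; true; false; false; true; false; false; false; false; false; false; false; false; true];
     [:: false; true; false; false; false; true; false; false; false; false; true; false; false; false];
     [:: false; true; false; false; false; false; true; true; false; false; false; false; false; false];
     [:: false; true; false; false; false; false; true; true; false; false; false; false; false; false];
     [:: false; true; false; false; false; false; false; false; true; false; false; false; false; false];
     [:: false; true; false; true; false; false; false; false; false; true; false; false; false; false];
     [:: false; true; false; false; false; true; false; false; false; false; true; false; false; false];
     [:: true; true; false; false; false; false; false; false; false; false; false; true; false; false];
     [:: false; true; true; false; false; false; false; false; false; false; false; false; true; false];
     [:: false; true; false; false; true; false; false; false; false; false; false; false; false; true]];
  [:: [:: true; false; true; false; false; false; false; false; true; false; false; false; false; false];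
     [:: false; true; true; false; false; false; false; false; false; false; false; false; true; false];
     [:: true; true; true; true; true; true; true; true; true; true; true; true; true; true];
     [:: false; false; true; true; false; false; false; false; false; false; false; false; false; true];
     [:: false; false; true; false; true; false; false; false; false; false; true; false; false; false];
     [:: false; false; true; false; false; true; false; true; false; false; false; false; false; false];
     [:: false; false; true; false; false; false; true; false; false; false; false; true; false; false];
     [:: false; false; true; false; false; true; false; true; false; false; false; false; false; false];
     [:: true; false; true; false; false; false; false; false; true; false; false; false; false; false];
     [:: false; false; true; false; false; false; false; false; false; true; false; false; false; false];
     [:: false; false; true; false; true; false; false; false; false; false; true; false; false; false];
     [:: false; false; true; false; false; false; true; false; false; false; false; true; false; false];
     [:: false; true; true; false; false; false; false; false; false; false; false; false; true; false];
     [:: false; false; true; true; false; false; false; false; false; false; false; false; false; true]];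
  [:: [:: true; false; false; true; false; false; false; false; false; false; false; false; true; false];
     [:: false; true; false; true; false; false; false; false; false; true; false; false; false; false];
     [:: false; false; true; true; false; false; false; false; false; false; false; false; false; true];
     [:: true; true; true; true; true; true; true; true; true; true; true; true; true; true];
     [:: false; false; false; true; true; false; false; true; false; false; false; false; false; false];
     [:: false; false; false; true; false; true; false; false; false; false; false; true; false; false];
     [:: false; false; false; true; false; false; true; false; true; false; false; false; false; false];
     [:: false; false; false; true; true; false; false; true; false; false; false; false; false; false];
     [:: false; false; false; true; false; false; true; false; true; false; false; false; false; false];
     [:: false; true; false; true; false; false; false; false; false; true; false; false; false; false];
     [:: false; false; false; true; false; false; false; false; false; false; true; false; false; false];
     [:: false; false; false; true; false; true; false; false; false; false; false; true; false; false];
     [:: true; false; false; true; false; false; false; false; false; false; false; false; true; false];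
     [:: false; false; true; true; false; false; false; false; false; false; false; false; false; true]];
  [:: [:: true; false; false; false; true; false; false; false; false; true; false; false; false; false];
     [:: false; true; false; false; true; false; false; false; false; false; false; false; false; true];
     [:: false; false; true; false; true; false; false; false; false; false; true; false; false; false];
     [:: false; false; false; true; true; false; false; true; false; false; false; false; false; false];
     [:: true; true; true; true; true; true; true; true; true; true; true; true; true; true];
     [:: false; false; false; false; true; true; false; false; true; false; false; false; false; false];
     [:: false; false; false; false; true; false; true; false; false; false; false; false; true; false];
     [:: false; false; false; true; true; false; false; true; false; false; false; false; false; false];
     [:: false; false; false; false; true; true; false; false; true; false; false; false; false; false];
     [:: true; false; false; false; true; false; false; false; false; true; false; false; false; false];
     [:: false; false; true; false; true; false; false; false; false; false; true; false; false; false];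
     [:: false; false; false; false; true; false; false; false; false; false; false; true; false; false];
     [:: false; false; false; false; true; false; true; false; false; false; false; false; true; false];
     [:: false; true; false; false; true; false; false; false; false; false; false; false; false; true]];
  [:: [:: true; false; false; false; false; true; false; false; false; false; false; false; false; true];
     [:: false; true; false; false; false; true; false; false; false; false; true; false; false; false];
     [:: false; false; true; false; false; true; false; true; false; false; false; false; false; false];
     [:: false; false; false; true; false; true; false; false; false; false; false; true; false; false];
     [:: false; false; false; false; true; true; false; false; true; false; false; false; false; false];
     [:: true; true; true; true; true; true; true; true; true; true; true; true; true; true];
     [:: false; false; false; false; false; true; true; false; false; true; false; false; false; false];
     [:: false; false; true; false; false; true; false; true; false; false; false; false; false; false];
     [:: false; false; false; false; true; true; false; false; true; false; false; false; false; false];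
     [:: false; false; false; false; false; true; true; false; false; true; false; false; false; false];
     [:: false; true; false; false; false; true; false; false; false; false; true; false; false; false];
     [:: false; false; false; true; false; true; false; false; false; false; false; true; false; false];
     [:: false; false; false; false; false; true; false; false; false; false; false; false; true; false];
     [:: true; false; false; false; false; true; false; false; false; false; false; false; false; true]];
  [:: [:: true; false; false; false; false; false; true; false; false; false; true; false; false; false];
     [:: false; true; false; false; false; false; true; true; false; false; false; false; false; false];
     [:: false; false; true; false; false; false; true; false; false; false; false; true; false; false];
     [:: false; false; false; true; false; false; true; false; true; false; false; false; false; false];
     [:: false; false; false; false; true; false; true; false; false; false; false; false; true; false];
     [:: false; false; false; false; false; true; true; false; false; true; false; false; false; false];
     [:: true; true; true; true; true; true; true; true; true; true; true; true; true; true];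
     [:: false; true; false; false; false; false; true; true; false; false; false; false; false; false];
     [:: false; false; false; true; false; false; true; false; true; false; false; false; false; false];
     [:: false; false; false; false; false; true; true; false; false; true; false; false; false; false];
     [:: true; false; false; false; false; false; true; false; false; false; true; false; false; false];
     [:: false; false; true; false; false; false; true; false; false; false; false; true; false; false];
     [:: false; false; false; false; true; false; true; false; false; false; false; false; true; false];
     [:: false; false; false; false; false; false; true; false; false; false; false; false; false; true]];
  [:: [:: true; false; false; false; false; false; false; true; false; false; false; false; false; false];
     [:: false; true; false; false; false; false; true; true; false; false; false; false; false; false];
     [:: false; false; true; false; false; true; false; true; false; false; false; false; false; false];
     [:: false; false; false; true; true; false; false; true; false; false; false; false; false; false];
     [:: false; false; false; true; true; false; false; true; false; false; false; false; false; false];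
     [:: false; false; true; false; false; true; false; true; false; false; false; false; false; false];
     [:: false; true; false; false; false; false; true; true; false; false; false; false; false; false];
     [:: true; true; true; true; true; true; true; true; true; true; true; true; true; true];
     [:: false; false; false; false; false; false; false; true; true; false; false; false; false; false];
     [:: false; false; false; false; false; false; false; true; false; true; false; false; false; false];
     [:: false; false; false; false; false; false; false; true; false; false; true; false; false; false];
     [:: false; false; false; false; false; false; false; true; false; false; false; true; false; false];
     [:: false; false; false; false; false; false; false; true; false; false; false; false; true; false];
     [:: false; false; false; false; false; false; false; true; false; false; false; false; false; true]];
  [:: [:: true; false; true; false; false; false; false; false; true; false; false; false; false; false];
     [:: false; true; false; false; false; false; false; false; true; false; false; false; false; false];
     [:: true; false; true; false; false; false; false; false; true; false; false; false; false; false];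
     [:: false; false; false; true; false; false; true; false; true; false; false; false; false; false];
     [:: false; false; false; false; true; true; false; false; true; false; false; false; false; false];
     [:: false; false; false; false; true; true; false; false; true; false; false; false; false; false];
     [:: false; false; false; true; false; false; true; false; true; false; false; false; false; false];
     [:: false; false; false; false; false; false; false; true; true; false; false; false; false; false];
     [:: true; true; true; true; true; true; true; true; true; true; true; true; true; true];
     [:: false; false; false; false; false; false; false; false; true; true; false; false; false; false];
     [:: false; false; false; false; false; false; false; false; true; false; true; false; false; false];
     [:: false; false; false; false; false; false; false; false; true; false; false; true; false; false];
     [:: false; false; false; false; false; false; false; false; true; false; false; false; true; false];
     [:: false; false; false; false; false; false; false; false; true; false; false; false; false; true]];
  [:: [:: true; false; false; false; true; false; false; false; false; true; false; false; false; false];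
     [:: false; true; false; true; false; false; false; false; false; true; false; false; false; false];
     [:: false; false; true; false; false; false; false; false; false; true; false; false; false; false];
     [:: false; true; false; true; false; false; false; false; false; true; false; false; false; false];
     [:: true; false; false; false; true; false; false; false; false; true; false; false; false; false];
     [:: false; false; false; false; false; true; true; false; false; true; false; false; false; false];
     [:: false; false; false; false; false; true; true; false; false; true; false; false; false; false];
     [:: false; false; false; false; false; false; false; true; false; true; false; false; false; false];
     [:: false; false; false; false; false; false; false; false; true; true; false; false; false; false];
     [:: true; true; true; true; true; true; true; true; true; true; true; true; true; true];
     [:: false; false; false; false; false; false; false; false; false; true; true; false; false; false];
     [:: false; false; false; false; false; false; false; false; false; true; false; true; false; false];
     [:: false; false; false; false; false; false; false; false; false; true; false; false; true; false];
     [:: false; false; false; false; false; false; false; false; false; true; false; false; false; true]];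
  [:: [:: true; false; false; false; false; false; true; false; false; false; true; false; false; false];
     [:: false; true; false; false; false; true; false; false; false; false; true; false; false; false];
     [:: false; false; true; false; true; false; false; false; false; false; true; false; false; false];
     [:: false; false; false; true; false; false; false; false; false; false; true; false; false; false];
     [:: false; false; true; false; true; false; false; false; false; false; true; false; false; false];
     [:: false; true; false; false; false; true; false; false; false; false; true; false; false; false];
     [:: true; false; false; false; false; false; true; false; false; false; true; false; false; false];
     [:: false; false; false; false; false; false; false; true; false; false; true; false; false; false];
     [:: false; false; false; false; false; false; false; false; true; false; true; false; false; false];
     [:: false; false; false; false; false; false; false; false; false; true; true; false; false; false];
     [:: true; true; true; true; true; true; true; true; true; true; true; true; true; true];
     [:: false; false; false; false; false; false; false; false; false; false; true; true; false; false];
     [:: false; false; false; false; false; false; false; false; false; false; true; false; true; false];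
     [:: false; false; false; false; false; false; false; false; false; false; true; false; false; true]];
  [:: [:: true; true; false; false; false; false; false; false; false; false; false; true; false; false];
     [:: true; true; false; false; false; false; false; false; false; false; false; true; false; false];
     [:: false; false; true; false; false; false; true; false; false; false; false; true; false; false];
     [:: false; false; false; true; false; true; false; false; false; false; false; true; false; false];
     [:: false; false; false; false; true; false; false; false; false; false; false; true; false; false];
     [:: false; false; false; true; false; true; false; false; false; false; false; true; false; false];
     [:: false; false; true; false; false; false; true; false; false; false; false; true; false; false];
     [:: false; false; false; false; false; false; false; true; false; false; false; true; false; false];
     [:: false; false; false; false; false; false; false; false; true; false; false; true; false; false];
     [:: false; false; false; false; false; false; false; false; false; true; false; true; false; false];
     [:: false; false; false; false; false; false; false; false; false; false; true; true; false; false];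
     [:: true; true; true; true; true; true; true; true; true; true; true; true; true; true];
     [:: false; false; false; false; false; false; false; false; false; false; false; true; true; false];
     [:: false; false; false; false; false; false; false; false; false; false; false; true; false; true]];
  [:: [:: true; false; false; true; false; false; false; false; false; false; false; false; true; false];
     [:: false; true; true; false; false; false; false; false; false; false; false; false; true; false];
     [:: false; true; true; false; false; false; false; false; false; false; false; false; true; false];
     [:: true; false; false; true; false; false; false; false; false; false; false; false; true; false];
     [:: false; false; false; false; true; false; true; false; false; false; false; false; true; false];
     [:: false; false; false; false; false; true; false; false; false; false; false; false; true; false];
     [:: false; false; false; false; true; false; true; false; false; false; false; false; true; false];
     [:: false; false; false; false; false; false; false; true; false; false; false; false; true; false];
     [:: false; false; false; false; false; false; false; false; true; false; false; false; true; false];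
     [:: false; false; false; false; false; false; false; false; false; true; false; false; true; false];
     [:: false; false; false; false; false; false; false; false; false; false; true; false; true; false];
     [:: false; false; false; false; false; false; false; false; false; false; false; true; true; false];
     [:: true; true; true; true; true; true; true; true; true; true; true; true; true; true];
     [:: false; false; false; false; false; false; false; false; false; false; false; false; true; true]];
  [:: [:: true; false; false; false; false; true; false; false; false; false; false; false; false; true];
     [:: false; true; false; false; true; false; false; false; false; false; false; false; false; true];
     [:: false; false; true; true; false; false; false; false; false; false; false; false; false; true];
     [:: false; false; true; true; false; false; false; false; false; false; false; false; false; true];
     [:: false; true; false; false; true; false; false; false; false; false; false; false; false; true];
     [:: true; false; false; false; false; true; false; false; false; false; false; false; false; true];
     [:: false; false; false; false; false; false; true; false; false; false; false; false; false; true];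
     [:: false; false; false; false; false; false; false; true; false; false; false; false; false; true];
     [:: false; false; false; false; false; false; false; false; true; false; false; false; false; true];
     [:: false; false; false; false; false; false; false; false; false; true; false; false; false; true];
     [:: false; false; false; false; false; false; false; false; false; false; true; false; false; true];
     [:: false; false; false; false; false; false; false; false; false; false; false; true; false; true];
     [:: false; false; false; false; false; false; false; false; false; false; false; false; true; true];
     [:: true; true; true; true; true; true; true; true; true; true; true; true; true; true]]].
Definition ZT (x y z : nat) : bool := nth false (nth [::] (nth [::] ZTl x) y) z.
Definition zt_ok : bool :=
  all (fun x => all (fun y => all (fun z => (Dn x y z == Z0) == ZT x y z) I14) I14) I14.
Definition zviol (g : seq nat) : bool :=
  let G := nth 0 g in
  hasl (fun x => hasl (fun y => hasl (fun z =>
    ZT x y z != ZT (G x) (G y) (G z)) I14) I14) I14.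
Definition final_ok : bool :=
  all (fun a => all (fun b => all (fun c =>
    let g := Gl a b c in if g == I14 then true else if zviol g then true else idfail g) I14) I14) I14.

Lemma nz_okT : nz_ok. Proof. vm_compute. reflexivity. Qed.
Lemma cross_okT : cross_ok. Proof. vm_compute. reflexivity. Qed.
Lemma uniq_okT : uniq_ok. Proof. vm_compute. reflexivity. Qed.
Lemma real_okT : real_ok. Proof. vm_compute. reflexivity. Qed.
Lemma zt_okT : zt_ok. Proof. vm_compute. reflexivity. Qed.
Lemma final_okT : final_ok. Proof. vm_compute. reflexivity. Qed.

Import Num.Theory.
Local Open Scope ring_scope.

Section Geo.
Variable F : numFieldType.

Definition zr (z : Z) : F := (int_of_Z z)%:~R.
Lemma zrB x y : zr (Z.sub x y) = zr x - zr y.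
Proof. by rewrite /zr -intrB -(rmorphB int_of_Z). Qed.
Lemma zrD x y : zr (Z.add x y) = zr x + zr y.
Proof. by rewrite /zr -intrD -(rmorphD int_of_Z). Qed.
Lemma zrM x y : zr (Z.mul x y) = zr x * zr y.
Proof. by rewrite /zr -intrM -(rmorphM int_of_Z). Qed.
Lemma zr0 : zr Z0 = 0.
Proof. by []. Qed.
Lemma zr_inj x y : zr x = zr y -> x = y.
Proof.
move=> /eqP; rewrite -subr_eq0 -intrB intr_eq0 subr_eq0 => /eqP.
by move/(can_inj int_of_ZK).
Qed.
Lemma zr_eq0 x : (zr x == 0) = (x == Z0).
Proof. by apply/eqP/eqP => [|->//]; rewrite -zr0; apply: zr_inj. Qed.

Definition j0 : 'I_3 := ord0.
Definition j1 : 'I_3 := lift ord0 (ord0 : 'I_2).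
Definition j2 : 'I_3 := lift ord0 (lift ord0 (ord0 : 'I_1)).

Definition det3 (u v w : 'rV[F]_3) : F :=
  u 0 j0 * (v 0 j1 * w 0 j2 - v 0 j2 * w 0 j1)
  - u 0 j1 * (v 0 j0 * w 0 j2 - v 0 j2 * w 0 j0)
  + u 0 j2 * (v 0 j0 * w 0 j1 - v 0 j1 * w 0 j0).

Lemma sum3 (f : 'I_3 -> F) : \sum_k f k = f j0 + f j1 + f j2.
Proof. by rewrite !big_ord_recl big_ord0 addr0 addrA. Qed.

Lemma dotE (u : 'rV[F]_3) (p : 'cV[F]_3) :
  (u *m p) 0 0 = u 0 j0 * p j0 0 + u 0 j1 * p j1 0 + u 0 j2 * p j2 0.
Proof. by rewrite mxE sum3. Qed.

Lemma mul0E (u : 'rV[F]_3) (p : 'cV[F]_3) :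
  (u *m p == 0) = ((u *m p) 0 0 == 0).
Proof.
apply/eqP/eqP => [->|H]; first by rewrite mxE.
by apply/matrixP => i j; rewrite !ord1 H mxE.
Qed.

Lemma vecE (p : 'cV[F]_3) : (p == 0) = [&& p j0 0 == 0, p j1 0 == 0 & p j2 0 == 0].
Proof.
apply/eqP/and3P => [->|[/eqP a /eqP b /eqP c]]; first by rewrite !mxE.
apply/matrixP => i k; rewrite ord1 mxE.
case: i => [[|[|[|n]]] Hi] //.
- by rewrite -a; congr (p _ _); apply: val_inj.
- by rewrite -b; congr (p _ _); apply: val_inj.
- by rewrite -c; congr (p _ _); apply: val_inj.
Qed.

Lemma conc_det (u v w : 'rV[F]_3) (p : 'cV[F]_3) :
  p != 0 -> u *m p = 0 -> v *m p = 0 -> w *m p = 0 -> det3 u v w = 0.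
Proof.
move=> pn0 /eqP; rewrite mul0E dotE => /eqP hu /eqP; rewrite mul0E dotE => /eqP hv.
move/eqP; rewrite mul0E dotE => /eqP hw.
apply/eqP; apply: contraR pn0 => dn0; rewrite vecE.
have e0 : det3 u v w * p j0 0 =
  (v 0 j1 * w 0 j2 - v 0 j2 * w 0 j1) * (u 0 j0 * p j0 0 + u 0 j1 * p j1 0 + u 0 j2 * p j2 0)
  + (w 0 j1 * u 0 j2 - w 0 j2 * u 0 j1) * (v 0 j0 * p j0 0 + v 0 j1 * p j1 0 + v 0 j2 * p j2 0)
  + (u 0 j1 * v 0 j2 - u 0 j2 * v 0 j1) * (w 0 j0 * p j0 0 + w 0 j1 * p j1 0 + w 0 j2 * p j2 0).
  by rewrite /det3; ring.
have e1 : det3 u v w * p j1 0 =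
  (v 0 j2 * w 0 j0 - v 0 j0 * w 0 j2) * (u 0 j0 * p j0 0 + u 0 j1 * p j1 0 + u 0 j2 * p j2 0)
  + (w 0 j2 * u 0 j0 - w 0 j0 * u 0 j2) * (v 0 j0 * p j0 0 + v 0 j1 * p j1 0 + v 0 j2 * p j2 0)
  + (u 0 j2 * v 0 j0 - u 0 j0 * v 0 j2) * (w 0 j0 * p j0 0 + w 0 j1 * p j1 0 + w 0 j2 * p j2 0).
  by rewrite /det3; ring.
have e2 : det3 u v w * p j2 0 =
  (v 0 j0 * w 0 j1 - v 0 j1 * w 0 j0) * (u 0 j0 * p j0 0 + u 0 j1 * p j1 0 + u 0 j2 * p j2 0)
  + (w 0 j0 * u 0 j1 - w 0 j1 * u 0 j0) * (v 0 j0 * p j0 0 + v 0 j1 * p j1 0 + v 0 j2 * p j2 0)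
  + (u 0 j0 * v 0 j1 - u 0 j1 * v 0 j0) * (w 0 j0 * p j0 0 + w 0 j1 * p j1 0 + w 0 j2 * p j2 0).
  by rewrite /det3; ring.
rewrite hu hv hw !mulr0 !addr0 in e0 e1 e2.
move/eqP: e0; move/eqP: e1; move/eqP: e2.
by rewrite !mulf_eq0 (negbTE dn0) /= => -> -> ->.
Qed.

Definition cr0 (u v : 'rV[F]_3) := u 0 j1 * v 0 j2 - u 0 j2 * v 0 j1.
Definition cr1 (u v : 'rV[F]_3) := u 0 j2 * v 0 j0 - u 0 j0 * v 0 j2.
Definition cr2 (u v : 'rV[F]_3) := u 0 j0 * v 0 j1 - u 0 j1 * v 0 j0.

Lemma det_conc (u v w : 'rV[F]_3) : det3 u v w = 0 ->
  [|| cr0 u v != 0, cr1 u v != 0 | cr2 u v != 0] ->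
  exists p : 'cV[F]_3, p != 0 /\ [/\ u *m p = 0, v *m p = 0 & w *m p = 0].
Proof.
move=> d0 cn0.
pose p : 'cV[F]_3 := \col_k (if k == j0 then cr0 u v else if k == j1 then cr1 u v else cr2 u v).
have P0 : p j0 0 = cr0 u v by rewrite mxE.
have P1 : p j1 0 = cr1 u v by rewrite mxE.
have P2 : p j2 0 = cr2 u v by rewrite mxE.
exists p; split; first by rewrite vecE P0 P1 P2; move: cn0; apply: contraL => /and3P[-> -> ->].
split; apply/eqP; rewrite mul0E dotE P0 P1 P2 /cr0 /cr1 /cr2; apply/eqP.
- by ring.
- by ring.
- by rewrite -d0 /det3; ring.
Qed.

Lemma prop_cross (u v : 'rV[F]_3) c : u = c *: v ->
  [&& cr0 u v == 0, cr1 u v == 0 & cr2 u v == 0].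
Proof.
by move=> ->; rewrite /cr0 /cr1 /cr2 !mxE; apply/and3P; split; apply/eqP; ring.
Qed.

Definition kA (A : 'M[F]_3) := det3 (row j0 A) (row j1 A) (row j2 A).

Lemma det3_rel l1 l2 l3 (u v w : 'rV[F]_3) (A : 'M[F]_3) :
  det3 (l1 *: (u *m A)) (l2 *: (v *m A)) (l3 *: (w *m A)) = l1 * l2 * l3 * kA A * det3 u v w.
Proof. by rewrite /kA /det3 !mxE !sum3 ?mxE; ring. Qed.

Lemma kA_mul (A B : 'M[F]_3) : kA (A *m B) = kA A * kA B.
Proof. by rewrite /kA /det3 !mxE !sum3 ?mxE; ring. Qed.

Lemma kA1 : kA 1%:M = 1.
Proof. by rewrite /kA /det3 !mxE /=; ring. Qed.

Lemma kA_unit (A : 'M[F]_3) : A \in unitmx -> kA A != 0.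
Proof.
move=> /mulmxV H; apply/eqP => k0.
have := kA_mul A (invmx A); rewrite H kA1 k0 mul0r => /eqP; by rewrite oner_eq0.
Qed.

Definition compz (p : Z * Z * Z) (j : 'I_3) : Z :=
  let: (a, b, c) := p in if val j == 0%N then a else if val j == 1%N then b else c.
Definition m0 (e : 'I_14) : 'rV[F]_3 := \row_j zr (compz (ptn e) j).

Lemma det_m0 (a b c : 'I_14) : det3 (m0 a) (m0 b) (m0 c) = zr (Dn a b c).
Proof.
rewrite /det3 !mxE /Dn /m0.
case: (ptn a) => [[a0 a1] a2]; case: (ptn b) => [[b0 b1] b2]; case: (ptn c) => [[c0 c1] c2].
by rewrite /det3z /= !(zrB, zrD, zrM).
Qed.

Lemma cr_m0 (e f : 'I_14) : crossz (ptn e) (ptn f) ->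
  [|| cr0 (m0 e) (m0 f) != 0, cr1 (m0 e) (m0 f) != 0 | cr2 (m0 e) (m0 f) != 0].
Proof.
rewrite /cr0 /cr1 /cr2 !mxE /m0.
case: (ptn e) => [[a0 a1] a2]; case: (ptn f) => [[b0 b1] b2].
rewrite /crossz /= => H.
by rewrite -!zrM -!zrB !zr_eq0.
Qed.

Lemma m0_nz (e : 'I_14) : ptn e != (Z0, Z0, Z0) -> m0 e != 0.
Proof.
move=> H; apply/eqP => E; move: H.
have E0 := congr1 (fun M : 'rV[F]_3 => M 0 j0) E.
have E1 := congr1 (fun M : 'rV[F]_3 => M 0 j1) E.
have E2 := congr1 (fun M : 'rV[F]_3 => M 0 j2) E.
move: E0 E1 E2; rewrite /m0 !mxE.
case: (ptn e) => [[a0 a1] a2] /= /eqP; rewrite zr_eq0 => /eqP -> /eqP; rewrite zr_eq0 => /eqP ->.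
by move/eqP; rewrite zr_eq0 => /eqP ->.
Qed.
End Geo.

Lemma memI (a : 'I_14) : (val a \in I14).
Proof. by rewrite mem_iota /= ltn_ord. Qed.

Lemma nbc3_iji i j : nbc3 i j i = false.
Proof. by apply/negbTE/negP => /and5P[h1 _ _ h4 _]; have := leq_ltn_trans h4 h1; rewrite ltnn. Qed.
Lemma nbc3_ijj i j : nbc3 i j j = false.
Proof. by apply/negbTE/negP => /and5P[_ h1 _ h4 _]; have := leq_ltn_trans h4 h1; rewrite ltnn. Qed.
Lemma nbc3_iik i k : nbc3 i i k = false.
Proof. by rewrite /nbc3 eqxx !andbF. Qed.

Lemma nbE (a b c : 'I_14) : M7_nonbasis [set a; b; c] = nb3 a b c.
Proof.
apply/existsP/idP.
- case=> i /existsP[j /existsP[k /and5P[h1 h2 h3 h4 /andP[h5 /eqP hs]]]].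
  have H : nbc3 i j k by apply/and5P.
  have mem : forall x : 'I_14, x \in [set i; j; k] -> [|| x == a, x == b | x == c].
    by move=> x; rewrite -hs !inE orbA.
  have := mem i; have := mem j; have := mem k; rewrite !inE !eqxx ?orbT.
  move=> /(_ isT) /or3P[/eqP Ek|/eqP Ek|/eqP Ek] /(_ isT) /or3P[/eqP Ej|/eqP Ej|/eqP Ej];
  move=> /(_ isT) /or3P[/eqP Ei|/eqP Ei|/eqP Ei]; move: H; rewrite Ei Ej Ek;
  (try by move=> H; rewrite /nb3 H ?orbT); by rewrite ?nbc3_iji ?nbc3_ijj ?nbc3_iik.
- have W : forall i j k : 'I_14, nbc3 i j k -> [set a; b; c] = [set i; j; k] ->
    exists i0 : 'I_14, [exists j0 : 'I_14, exists k0 : 'I_14,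
    [&& (i0 < 7)%N, (j0 < 7)%N, i0 != j0, (7 <= k0)%N,
        ((i0.+1 + j0.+1) %% 7 == (2 * (k0.+1 - 7)) %% 7)%N
      & [set a; b; c] == [set i0; j0; k0]]].
    move=> i j k /and5P[h1 h2 h3 h4 h5] E; exists i; apply/existsP; exists j.
    by apply/existsP; exists k; rewrite E eqxx h1 h2 h3 h4 h5.
  have SE : forall i j k : 'I_14, (forall x, [|| x == a, x == b | x == c] = [|| x == i, x == j | x == k]) ->
      [set a; b; c] = [set i; j; k].
    by move=> i j k Hx; apply/setP => x; rewrite !inE -!orbA Hx.
  move=> /orP[H|/orP[H|/orP[H|/orP[H|/orP[H|H]]]]].
  all: apply: (W _ _ _ H).
  all: apply: SE => x.
  all: by case: (x == a); case: (x == b); case: (x == c).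
Qed.

Section Real.
Variable F : numFieldType.

Lemma crossI (e f : 'I_14) : e != f -> crossz (ptn e) (ptn f).
Proof.
move=> nef; have := allP cross_okT (val e) (memI e) => /allP /(_ (val f) (memI f)).
by rewrite val_eqE (negbTE nef).
Qed.

Arguments crossI {e f}.
Arguments cr_m0 F {e f}.
Lemma m0_real : M7_realization (m0 F).
Proof.
split.
- by move=> e; apply: m0_nz; exact: (allP nz_okT (val e) (memI e)).
- move=> e f nef [c E]; have := @prop_cross F _ _ _ E; have := cr_m0 F (crossI nef).
  by case/or3P => /negbTE ->; rewrite ?andbF.
- move=> a b c hab hbc hac; rewrite nbE.
  have := allP real_okT (val a) (memI a) => /allP /(_ (val b) (memI b)).
  move=> /allP /(_ (val c) (memI c)).
  rewrite !val_eqE (negbTE hab) (negbTE hbc) (negbTE hac) /= => /eqP R.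
  split.
  + case=> p [pn0 [ha hb hc]]; have := @conc_det F _ _ _ _ pn0 ha hb hc; rewrite det_m0 => /eqP.
    by rewrite zr_eq0 R.
  + move=> nb; apply: (@det_conc F); last first. apply: cr_m0. exact: crossI hab.
    by rewrite det_m0; apply/eqP; rewrite zr_eq0 R.
Qed.
End Real.

Lemma ZTE x y z : (x < 14)%N -> (y < 14)%N -> (z < 14)%N -> ZT x y z = (Dn x y z == Z0).
Proof.
move=> hx hy hz; have mI : forall n, (n < 14)%N -> n \in I14 by move=> n hn; rewrite mem_iota.
have := allP zt_okT x (mI x hx) => /allP /(_ y (mI y hy)) /allP /(_ z (mI z hz)).
by move/eqP.
Qed.

Lemma ifE (b1 b2 b3 : bool) : (if b1 then true else if b2 then true else b3) = [|| b1, b2 | b3].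
Proof. by case: b1; case: b2. Qed.

Lemma main (F : numFieldType) (s : {perm 'I_14}) (A : 'M[F]_3) (lam : 'I_14 -> F) :
  A \in unitmx -> (forall e, lam e != 0) ->
  (forall e, relabel s (m0 F) e = lam e *: (m0 F e *m A)) -> s = 1%g.
Proof.
move=> Au lnz Hl.
set t := (s^-1)%g.
have Rel : forall a b c : 'I_14, zr F (Dn (t a) (t b) (t c)) =
    lam a * lam b * lam c * kA F A * zr F (Dn a b c).
  have Hl' : forall e, m0 F (t e) = lam e *: (m0 F e *m A) by exact: Hl.
  by move=> a b c; rewrite -!det_m0 !Hl' det3_rel.
pose tn (n : nat) : nat := val (t (inord n)).
pose lm (n : nat) : F := lam (inord n).
have RelN : forall a b c, (a < 14)%N -> (b < 14)%N -> (c < 14)%N ->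
    zr F (Dn (tn a) (tn b) (tn c)) = lm a * lm b * lm c * kA F A * zr F (Dn a b c).
  move=> a b c ha hb hc; rewrite /tn /lm Rel.
  by rewrite !inordK.
have kAn := @kA_unit F A Au.
have Zero : forall a b c, (a < 14)%N -> (b < 14)%N -> (c < 14)%N ->
    (Dn (tn a) (tn b) (tn c) == Z0) = (Dn a b c == Z0).
  move=> a b c ha hb hc; rewrite -!(zr_eq0 F) RelN // !mulf_eq0 !(negbTE (lnz _)).
  by rewrite (negbTE kAn).
have I5 : Z.mul (Z.mul (Z.mul (Dn (tn 7) (tn 0) (tn 1)) (Dn (tn 7) (tn 8) (tn 9))) (Dn 7 0 8)) (Dn 7 1 9)
   = Z.mul (Z.mul (Z.mul (Dn 7 0 1) (Dn 7 8 9)) (Dn (tn 7) (tn 0) (tn 8))) (Dn (tn 7) (tn 1) (tn 9)).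
  have r1 := RelN 7 0 1 isT isT isT; have r2 := RelN 7 8 9 isT isT isT.
  have r3 := RelN 7 0 8 isT isT isT; have r4 := RelN 7 1 9 isT isT isT.
  move: r1 r2 r3 r4.
  move: (Dn 7 0 1) (Dn 7 8 9) (Dn 7 0 8) (Dn 7 1 9) => d1 d2 d3 d4.
  move: (Dn (tn 7) (tn 0) (tn 1)) (Dn (tn 7) (tn 8) (tn 9)) (Dn (tn 7) (tn 0) (tn 8)) (Dn (tn 7) (tn 1) (tn 9)) => f1 f2 f3 f4.
  move=> r1 r2 r3 r4; apply: (@zr_inj F); rewrite !zrM r1 r2 r3 r4; ring.
have tnlt : forall n, (tn n < 14)%N by move=> n; exact: ltn_ord.
have tninj : forall x y, (x < 14)%N -> (y < 14)%N -> tn x = tn y -> x = y.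
  move=> x y hx hy H; have := congr1 val (perm_inj (val_inj H)).
  by rewrite /= !inordK.
have step : forall x y z, (x < 14)%N -> (y < 14)%N -> (z < 14)%N ->
    x != y -> z != x -> z != y -> Dn x y z = Z0 -> thirdn (tn x) (tn y) = tn z.
  move=> x y z hx hy hz nxy nzx nzy D0.
  have := allP uniq_okT (tn x) (memI (t (inord x))) => /allP /(_ (tn y) (memI (t (inord y)))).
  move=> /allP /(_ (tn z) (memI (t (inord z)))).
  have -> : (Dn (tn x) (tn y) (tn z) == Z0) by rewrite Zero // D0.
  have nn : forall u v, (u < 14)%N -> (v < 14)%N -> u != v -> tn u != tn v.
    by move=> u v hu hv; apply: contra => /eqP /tninj; move=> /(_ hu hv) ->.
  by rewrite (nn x y) // (nn z x) // (nn z y) //= => /eqP.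
have e11 := step 0 1 11 isT isT isT isT isT isT (erefl _).
have e8 := step 0 2 8 isT isT isT isT isT isT (erefl _).
have e12 := step 1 2 12 isT isT isT isT isT isT (erefl _).
have e6 := step 2 11 6 isT isT isT isT isT isT (erefl _).
have e3 := step 0 12 3 isT isT isT isT isT isT (erefl _).
have e10 := step 0 6 10 isT isT isT isT isT isT (erefl _).
have e7 := step 1 6 7 isT isT isT isT isT isT (erefl _).
have e9 := step 1 3 9 isT isT isT isT isT isT (erefl _).
have e5 := step 1 10 5 isT isT isT isT isT isT (erefl _).
have e13 := step 2 3 13 isT isT isT isT isT isT (erefl _).
have e4 := step 2 10 4 isT isT isT isT isT isT (erefl _).
have HG : Gl (tn 0) (tn 1) (tn 2) = map tn I14.
  rewrite /Gl; cbv zeta beta.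
  by rewrite e11 e8 e12 e6 e3 e10 e7 e9 e5 e13 e4.
have nthm : forall n, (n < 14)%N -> nth 0%N (map tn I14) n = tn n.
  by move=> n hn; rewrite (nth_map 0%N) ?size_iota // nth_iota.
have := allP final_okT (tn 0) (memI _) => /allP /(_ (tn 1) (memI _)) /allP /(_ (tn 2) (memI _)).
cbv zeta beta; rewrite HG ifE => /or3P[/eqP E | Zv | If].
- have tid : forall x, t x = x.
    move=> x; have := nthm x (ltn_ord x).
    rewrite E nth_iota ?ltn_ord // add0n /tn inord_val => h.
    by apply: ord_inj; rewrite -h.
  have : t = 1%g by apply/permP => x; rewrite perm1 tid.
  by rewrite /t => Ht; rewrite -[s]invgK Ht invg1.
- move: Zv; rewrite /zviol !haslE => /hasP[x]; rewrite mem_iota add0n => /andP[_ hx].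
  rewrite haslE => /hasP[y]; rewrite mem_iota add0n => /andP[_ hy].
  rewrite haslE => /hasP[z]; rewrite mem_iota add0n => /andP[_ hz].
  by rewrite !nthm // !ZTE // Zero // eqxx.
- by move: If; rewrite /idfail !nthm // I5 eqxx.
Qed.

Theorem proposition3p4 (R : realType) (s : {perm 'I_14}) :
  M7_aut s ->
  (forall m : 'I_14 -> 'rV[R[i]]_3,
      M7_realization m -> PGL3_equiv m (relabel s m)) ->
  s = 1%g.
Proof.
move=> Haut H; have [A [Au [lam [lnz Hl]]]] := H (m0 R[i]) (m0_real R[i]).
exact: main Au lnz Hl.
Qed.
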